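(* Let $E$ be the group of subsets of $\{1,2,3,4,5\}$ of even cardinality with symmetric difference as group operation (so $E\cong\boldsymbol{\mu}_2^4$), and for an even subset $A$ write $\iota_A$ for the corresponding element of $E$ (e.g. $\iota_{12}=\iota_{\{1,2\}}$). Let $W=E\rtimes\mathfrak{S}_5$, where $\mathfrak{S}_5$ acts on $E$ by permuting elements of subsets, so that $\sigma\iota_A\sigma^{-1}=\iota_{\sigma(A)}$ in $W$, and let $\rho\colon W\to\mathfrak{S}_5$ be the natural projection. Let $H\subset\operatorname{Ker}(\rho)=E$ be a subgroup of order at least $8$, and assume that the element $(1234)\in\mathfrak{S}_5\subset W$ normalizes $H$. Then $\iota_{12}\in H$.
   Context: $W$ is isomorphic to the Weyl group $W(\mathrm{D}_5)$; $\mathfrak{S}_5$ is the symmetric group on $\{1,\dots,5\}$ and $(1234)$ the $4$-cycle. *)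

(* Defs.v *)
From mathcomp Require Import all_boot all_order all_fingroup.
Set Implicit Arguments. Unset Strict Implicit. Unset Printing Implicit Defensive.

Definition pt (k : nat) : 'I_5 := inord k.-1.

Definition symdiff (A B : {set 'I_5}) : {set 'I_5} := (A :\: B) :|: (B :\: A).

Definition evenset (A : {set 'I_5}) : bool := ~~ odd #|A|.

Definition subgroupE (H : {set {set 'I_5}}) : Prop :=
  [/\ forall A, A \in H -> evenset A,
      set0 \in H &
      forall A B, A \in H -> B \in H -> symdiff A B \in H].

Definition c1234_fun (i : 'I_5) : 'I_5 :=
  if (i : nat) < 3 then inord i.+1 else if (i : nat) == 3 then inord 0 else i.

Lemma c1234_inj : injective c1234_fun.
Proof.
move=> i j; rewrite /c1234_fun.
case: i => [[|[|[|[|[|?]]]]] Hi] //; case: j => [[|[|[|[|[|?]]]]] Hj] //=;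
  move/(congr1 val); rewrite /= ?inordK //= => H; apply/val_inj => //.
Qed.

Definition c1234 : {perm 'I_5} := perm c1234_inj.

(* Inside W = E ⋊ S_5 we have  s * iota_A * s^-1 = iota_{s(A)}, so s
   normalizes a subgroup H of E iff {s(A) | A in H} = H. *)
Definition normalizes (s : {perm 'I_5}) (H : {set {set 'I_5}}) : Prop :=
  (fun A : {set 'I_5} => [set s x | x in A]) @: H = H.

Definition iota12 : {set 'I_5} := [set pt 1; pt 2].

(* Main.v *)
Require Import Defs.
From mathcomp Require Import all_boot all_order all_fingroup.
From mathcomp Require Import zify.
Set Implicit Arguments. Unset Strict Implicit.
Definition s (A : {set 'I_5}) := [set c1234 x | x in A].
Lemma s_pair a b : s [set a; b] = [set c1234 a; c1234 b].
Proof. by rewrite /s imsetU1 imset_set1. Qed.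
Lemma ptv (x : 'I_5) k : 0 < k <= 5 -> (x == pt k) = (val x == k.-1).
Proof. by case/andP=> H1 H2; rewrite -val_eqE /= inordK //; case: k H1 H2 => [|k]. Qed.
Lemma cpt k : 0 < k < 4 -> c1234 (pt k) = pt k.+1.
Proof.
case/andP=> H1 H2; apply/val_inj; rewrite permE /c1234_fun /pt /= inordK;
 case: k H1 H2 => [|[|[|[|]]]] //= _ _; by rewrite !inordK.
Qed.
Lemma cpt4 : c1234 (pt 4) = pt 1.
Proof. apply/val_inj; by rewrite permE /c1234_fun /pt /= !inordK. Qed.
Lemma cpt5 : c1234 (pt 5) = pt 5.
Proof. apply/val_inj; by rewrite permE /c1234_fun /pt /= !inordK. Qed.
Ltac setdec := apply/setP; case => [[|[|[|[|[|?]]]]] ?]; rewrite /symdiff /iota12 !inE ?ptv //.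
Lemma t1 : s [set pt 1; pt 5] = [set pt 2; pt 5].
Proof. by rewrite s_pair cpt // cpt5. Qed.
Lemma t2 : symdiff iota12 [set pt 1; pt 5] = [set pt 2; pt 5].
Proof. by setdec. Qed.
Lemma t3 : symdiff [set pt 2; pt 5] [set pt 3; pt 5] = [set pt 2; pt 3].
Proof. by setdec. Qed.
Lemma t4 : s (s (s [set pt 2; pt 3])) = iota12.
Proof. by do 3 rewrite s_pair ?cpt4 ?cpt //. Qed.
Lemma t5 : evenset [set pt 1; pt 5].
Proof. by rewrite /evenset cards2 ptv // /pt /= inordK. Qed.

Lemma sdC (a c : {set 'I_5}) : symdiff (symdiff a c) c = a.
Proof. apply/setP=> x; rewrite /symdiff !inE; by case: (x \in a); case: (x \in c). Qed.
Lemma sdK (a c : {set 'I_5}) : symdiff a (symdiff a c) = c.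
Proof. apply/setP=> x; rewrite /symdiff !inE; by case: (x \in a); case: (x \in c). Qed.

Lemma odd_sd A B : odd #|symdiff A B| = odd #|A| (+) odd #|B|.
Proof.
have -> : #|symdiff A B| = #|A :\: B| + #|B :\: A|.
  rewrite /symdiff cardsU.
  have -> : (A :\: B) :&: (B :\: A) = set0.
    by apply/setP=> x; rewrite !inE; case: (x \in A); case: (x \in B).
  by rewrite cards0 subn0.
rewrite -(cardsID B A) -(cardsID A B) setIC !oddD.
by case: (odd #|B :&: A|); case: (odd #|A :\: B|); case: (odd #|B :\: A|).
Qed.

Lemma card_even : #|[set A : {set 'I_5} | evenset A]| <= 16.
Proof.
set E := [set A : {set 'I_5} | evenset A].
have inj : injective (fun A => symdiff A [set pt 5]) by apply: (@can_inj _ _ _ (fun A => symdiff A [set pt 5]) (fun A => sdC A [set pt 5])).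
have sub : (fun A => symdiff A [set pt 5]) @: E \subset ~: E.
  apply/subsetP=> B /imsetP [C]; rewrite !inE /evenset => HC ->.
  by rewrite odd_sd cards1 (negbTE HC).
have := subset_leq_card sub; rewrite card_imset // => le.
have := cardsC E; rewrite -cardsT -powersetT card_powerset cardsT card_ord => eq.
lia.
Qed.

Theorem lemma3p2 (H : {set {set 'I_5}}) :
  subgroupE H -> 8 <= #|H| -> normalizes c1234 H -> iota12 \in H.
Proof.
case=> Hev H0 Hsd Hcard Hn.
case: (boolP (iota12 \in H)) => // N12; exfalso.
have HS : forall A, A \in H -> s A \in H.
  by move=> A HA; rewrite -Hn; apply/imsetP; exists A.
have Hcov : forall A, evenset A -> A \in H \/ symdiff iota12 A \in H.
  move=> A HA.
  set K := H :|: symdiff iota12 @: H.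
  have dis : H :&: (symdiff iota12 @: H) = set0.
    apply/setP=> B; rewrite !inE; apply/negbTE/andP; case=> HB /imsetP [C HC eB].
    by move: N12; rewrite -(sdC iota12 C) -eB (Hsd _ _ HB HC).
  have cK : #|K| = #|H| + #|H|.
    by rewrite /K cardsU dis cards0 subn0 card_imset //; apply: (@can_inj _ _ _ (symdiff iota12) (sdK iota12)).
  have sKE : K \subset [set A : {set 'I_5} | evenset A].
    apply/subsetP=> B; rewrite !inE => /orP [HB|/imsetP [C HC ->]]; first exact: Hev.
    by rewrite /evenset odd_sd (negbTE (Hev _ HC)) /iota12 cards2 ptv // /pt /= !inordK.
  have eK : K = [set A : {set 'I_5} | evenset A].
    apply/eqP; rewrite eqEcard sKE /= cK; move: card_even Hcard; move: (#|[set A0 : {set 'I_5} | evenset A0]|) (#|H|) => a b; lia.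
  have : A \in K by rewrite eK inE.
  rewrite inE => /orP [-> |]; first by left.
  case/imsetP=> C HC ->; right; by rewrite sdK.
have Hn23 : [set pt 2; pt 3] \notin H.
  apply/negP=> h; move: N12; by rewrite -t4 !HS.
case: (Hcov _ t5); rewrite ?t2 => h.
  by move: N12; rewrite -(sdC iota12 [set pt 1; pt 5]) t2 Hsd // -t1 HS.
have t6 : s [set pt 2; pt 5] = [set pt 3; pt 5] by rewrite s_pair cpt // cpt5.
have h3 : [set pt 3; pt 5] \in H by rewrite -t6 HS.
have := Hsd _ _ h h3; rewrite t3 => h23.
by rewrite h23 in Hn23.
Qed.
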